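(* Let $G$ be a Lie group, $H\subseteq G$ a closed subgroup, and $\mathfrak{g}=\mathfrak{h}\oplus\mathfrak{m}$ a reductive decomposition. Equip $G/H$ with a $G$-invariant Riemannian metric (an $\mathrm{Ad}(H)$-invariant inner product $\langle\cdot,\cdot\rangle$ on $\mathfrak{m}$). Suppose $A$ is a $G$-invariant Codazzi tensor field on $G/H$, with $\langle\cdot,\cdot\rangle$-orthogonal eigenspace decomposition $\mathfrak{m}=\mathfrak{m}_1\oplus\cdots\oplus\mathfrak{m}_r$ on $\mathfrak{m}$, where $\mathfrak{m}_i$ corresponds to the eigenvalue $\lambda_i$ and $\lambda_1<\cdots<\lambda_r$. Then: (i) for $j\in\{1,r\}$ and every $Y\in\mathfrak{m}$, $\mathrm{Ric}^d(Y_j,Y_j)\le\mathrm{Ric}^d_j(Y_j,Y_j)$, where $Y_j$ is the $\mathfrak{m}_j$-component of $Y$; (ii) $\mathrm{s}^d_1+\cdots+\mathrm{s}^d_r=\mathrm{s}^d$.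
   Context: A reductive decomposition means $\mathfrak{m}$ is an $\mathrm{Ad}(H)$-invariant vector space complement of $\mathfrak{h}$ in $\mathfrak{g}$; $[X,Y]_{\mathfrak{m}}$ is the $\mathfrak{m}$-component of $[X,Y]$ in $\mathfrak{g}=\mathfrak{h}\oplus\mathfrak{m}$, and $\mathfrak{m}\cong T_{eH}(G/H)$. $G$-invariant tensor fields correspond to $\mathrm{Ad}(H)$-invariant tensors on $\mathfrak{m}$. A Codazzi tensor field is a symmetric twice-covariant tensor field $A$ with $(\nabla_XA)(Y,Z)=(\nabla_YA)(X,Z)$ for all vector fields, $\nabla$ the Levi-Civita connection. The Levi-Civita product $\alpha:\mathfrak{m}\times\mathfrak{m}\to\mathfrak{m}$ is defined by $2\langle\alpha(X,Y),Z\rangle=\langle[X,Y]_{\mathfrak{m}},Z\rangle-\langle X,[Y,Z]_{\mathfrak{m}}\rangle-\langle[X,Z]_{\mathfrak{m}},Y\rangle$. The difference curvature tensor is $R^d=R-R^0$, where $R$ is the Riemann curvature at $eH$ and $R^0(X,Y)Z=-[[X,Y]_{\mathfrak{h}},Z]$ is the curvature of the canonical connection of the second kind; explicitly $R^d(X,Y)Z=\alpha(X,\alpha(Y,Z))-\alpha(Y,\alpha(X,Z))-\alpha([X,Y]_{\mathfrak{m}},Z)$ for $X,Y,Z\in\mathfrak{m}$. The difference Ricci tensor is $\mathrm{Ric}^d(Y,Z)=\mathrm{tr}(X\mapsto R^d(X,Y)Z)$ (trace over $\mathfrak{m}$), and $\mathrm{s}^d$ is its trace with respect to $\langle\cdot,\cdot\rangle$.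 Each eigenspace $\mathfrak{m}_i$ is closed under $[\cdot,\cdot]_{\mathfrak{m}}$ and $\alpha$, so for $Y_i,Z_i\in\mathfrak{m}_i$ the endomorphism $X\mapsto R^d(X,Y_i)Z_i$ of $\mathfrak{m}$ restricts to an endomorphism of $\mathfrak{m}_i$; $\mathrm{Ric}^d_i(Y_i,Z_i)$ is the trace of this restriction, and $\mathrm{s}^d_i$ is the trace of $\mathrm{Ric}^d_i$ with respect to $\langle\cdot,\cdot\rangle|_{\mathfrak{m}_i\times\mathfrak{m}_i}$. *)

(* Defs.v *)
(* Algebraic (Lie-algebra-level) setting on m = 'rV[R]_n. *)
From HB Require Import structures.
From mathcomp Require Import all_boot all_order all_algebra.
Set Implicit Arguments. Unset Strict Implicit. Unset Printing Implicit Defensive.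
Import Order.TTheory GRing.Theory Num.Theory.
Local Open Scope ring_scope.

Section HomogeneousAlgebra.
Variables (R : realFieldType) (n : nat).

Definition evec (a : 'I_n) : 'rV[R]_n := delta_mx 0 a.

(* inner product <X,Y> on m given by a (symmetric positive definite) Gram matrix Q *)
Definition ipQ (Q : 'M[R]_n) (X Y : 'rV[R]_n) : R := (X *m Q *m Y^T) 0 0.

(* the bilinear form A(X,Y) given by its matrix Bm *)
Definition bilin (Bm : 'M[R]_n) (X Y : 'rV[R]_n) : R := (X *m Bm *m Y^T) 0 0.

(* [X,Y]_m, given by structure constants c a b = [e_a,e_b]_m *)
Definition brm (c : 'I_n -> 'I_n -> 'rV[R]_n) (X Y : 'rV[R]_n) : 'rV[R]_n :=
  \sum_(a < n) \sum_(b < n) (X 0 a * Y 0 b) *: c a b.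

(* Levi-Civita product: the unique alpha(X,Y) with
   2<alpha(X,Y),Z> = <[X,Y]_m,Z> - <X,[Y,Z]_m> - <[X,Z]_m,Y>  for all Z *)
Definition alphaLC Q c (X Y : 'rV[R]_n) : 'rV[R]_n :=
  (\row_k (2^-1 * (ipQ Q (brm c X Y) (evec k) - ipQ Q X (brm c Y (evec k))
                    - ipQ Q (brm c X (evec k)) Y))) *m invmx Q.

Definition Rd Q c (X Y Z : 'rV[R]_n) : 'rV[R]_n :=
  alphaLC Q c X (alphaLC Q c Y Z) - alphaLC Q c Y (alphaLC Q c X Z)
  - alphaLC Q c (brm c X Y) Z.

Definition Ricd Q c (Y Z : 'rV[R]_n) : R := \tr (lin1_mx (fun X => Rd Q c X Y Z)).

Definition restr_trace (f : 'rV[R]_n -> 'rV[R]_n) (E : 'M[R]_n) : R :=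
  \tr (row_base E *m lin1_mx f *m pinvmx (row_base E)).

Definition metric_trace_on Q (b : 'rV[R]_n -> 'rV[R]_n -> R) (E : 'M[R]_n) : R :=
  let B := row_base E in
  let G := B *m Q *m B^T in
  \sum_(p < \rank E) \sum_(q < \rank E) invmx G p q * b (row p B) (row q B).

Definition sd Q c : R :=
  \sum_(a < n) \sum_(b < n) invmx Q a b * Ricd Q c (evec a) (evec b).

Definition Ricd_on Q c (E : 'M[R]_n) (Y Z : 'rV[R]_n) : R :=
  restr_trace (fun X => Rd Q c X Y Z) E.

Definition sd_on Q c (E : 'M[R]_n) : R := metric_trace_on Q (Ricd_on Q c E) E.

(* Covariant derivative at eH of the G-invariant tensor A (matrix Bm) :
   (nabla_X A)(Y,Z) = - A(alpha(X,Y),Z) - A(Y,alpha(X,Z)) *)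
Definition nablaA Q c Bm (X Y Z : 'rV[R]_n) : R :=
  - bilin Bm (alphaLC Q c X Y) Z - bilin Bm Y (alphaLC Q c X Z).

Definition codazzi Q c Bm : Prop :=
  forall X Y Z : 'rV[R]_n, nablaA Q c Bm X Y Z = nablaA Q c Bm Y X Z.

(* eigenspace m_i of A w.r.t. <.,.> for eigenvalue l: {X | A(X,.) = l <X,.>},
   i.e. the eigenspace of the <.,.>-self-adjoint endomorphism Bm Q^-1 *)
Definition eigsp Q Bm (l : R) : 'M[R]_n := eigenspace (Bm *m invmx Q) l.

End HomogeneousAlgebra.

(* Main.v *)
Require Import Defs.
From HB Require Import structures.
From mathcomp Require Import all_boot all_order all_algebra.
From mathcomp Require Import ring lra.
Set Implicit Arguments. Unset Strict Implicit. Unset Printing Implicit Defensive.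
Import Order.TTheory GRing.Theory Num.Theory.
Local Open Scope ring_scope.

Section Lin.
Variables (R : realFieldType) (n : nat).
Implicit Types (X Y Z : 'rV[R]_n).

Definition linR (f : 'rV[R]_n -> R) := forall a X Y, f (a *: X + Y) = a * f X + f Y.
Definition linV (f : 'rV[R]_n -> 'rV[R]_n) := forall a X Y, f (a *: X + Y) = a *: f X + f Y.

Lemma linR0 f (h : linR f) : f 0 = 0.
Proof. by have := h (-1) 0 0; rewrite addr0 scaler0 mulN1r addNr. Qed.
Lemma linV0 f (h : linV f) : f 0 = 0.
Proof. by have := h (-1) 0 0; rewrite addr0 scaler0 scaleN1r addNr. Qed.
Lemma linRD f (h : linR f) X Y : f (X + Y) = f X + f Y.
Proof. by  rewrite -[X]scale1r h mul1r scale1r. Qed.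
Lemma linRZ f (h : linR f) a X : f (a *: X) = a * f X.
Proof. by  rewrite -[a *: X]addr0 h linR0 // addr0. Qed.
Lemma linRN f (h : linR f) X : f (- X) = - f X.
Proof. by  rewrite -scaleN1r linRZ // mulN1r. Qed.
Lemma linRB f (h : linR f) X Y : f (X - Y) = f X - f Y.
Proof. by  rewrite linRD // linRN. Qed.
Lemma linVD f (h : linV f) X Y : f (X + Y) = f X + f Y.
Proof. by  rewrite -[X]scale1r h !scale1r. Qed.
Lemma linVZ f (h : linV f) a X : f (a *: X) = a *: f X.
Proof. by  rewrite -[a *: X]addr0 h linV0 // addr0. Qed.
Lemma linVN f (h : linV f) X : f (- X) = - f X.
Proof. by  rewrite -scaleN1r linVZ // scaleN1r. Qed.
Lemma linVB f (h : linV f) X Y : f (X - Y) = f X - f Y.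
Proof. by  rewrite linVD // linVN. Qed.

Lemma linR_sum f (h : linR f) (I : finType) (P : pred I) (a : I -> R) (V : I -> 'rV[R]_n) :
  f (\sum_(i | P i) a i *: V i) = \sum_(i | P i) a i * f (V i).
Proof.
elim/big_rec2: _ => [|i y1 y2 _ <-]; first exact: linR0.
by rewrite h.
Qed.
Lemma linR_sumD f (h : linR f) (I : finType) (P : pred I) (V : I -> 'rV[R]_n) :
  f (\sum_(i | P i) V i) = \sum_(i | P i) f (V i).
Proof.
elim/big_rec2: _ => [|i y1 y2 _ <-]; first exact: linR0.
by rewrite linRD.
Qed.
Lemma linV_sum f (h : linV f) (I : finType) (P : pred I) (a : I -> R) (V : I -> 'rV[R]_n) :
  f (\sum_(i | P i) a i *: V i) = \sum_(i | P i) a i *: f (V i).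
Proof.
elim/big_rec2: _ => [|i y1 y2 _ <-]; first exact: linV0.
by rewrite h.
Qed.
Lemma linV_sumD f (h : linV f) (I : finType) (P : pred I) (V : I -> 'rV[R]_n) :
  f (\sum_(i | P i) V i) = \sum_(i | P i) f (V i).
Proof.
elim/big_rec2: _ => [|i y1 y2 _ <-]; first exact: linV0.
by rewrite linVD.
Qed.

Lemma linR_exp f (h : linR f) Y : f Y = \sum_(k < n) Y 0 k * f (delta_mx 0 k).
Proof. by  rewrite {1}(row_sum_delta Y) linR_sum. Qed.
Lemma linV_exp f (h : linV f) Y : f Y = \sum_(k < n) Y 0 k *: f (delta_mx 0 k).
Proof. by  rewrite {1}(row_sum_delta Y) linV_sum. Qed.

Lemma linR_comp (g : 'rV[R]_n -> R) f : linR g -> linV f -> linR (fun X => g (f X)).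
Proof. by move=> hg hf a X Y; rewrite hf hg. Qed.
Lemma linV_comp g f : linV g -> linV f -> linV (fun X => g (f X)).
Proof. by move=> hg hf a X Y; rewrite hf hg. Qed.

Lemma mul_rV_lin1' f (h : linV f) u : u *m lin1_mx f = f u.
Proof.
rewrite mulmx_sum_row (linV_exp h u); apply: eq_bigr => i _.
by congr (_ *: _); apply/rowP => j; rewrite !mxE.
Qed.

Lemma bilV_exp (f : 'rV[R]_n -> 'rV[R]_n -> 'rV[R]_n) Y Z :
  (forall Z, linV (f ^~ Z)) -> (forall Y, linV (f Y)) ->
  f Y Z = \sum_(a < n) \sum_(b < n) (Y 0 a * Z 0 b) *: f (delta_mx 0 a) (delta_mx 0 b).
Proof.
move=> h1 h2; rewrite (linV_exp (h1 Z) Y); apply: eq_bigr => a _.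
rewrite (linV_exp (h2 _) Z) scaler_sumr; apply: eq_bigr => b _.
by rewrite scalerA.
Qed.

Lemma lin3_arith a (A A' B B' C C' : 'rV[R]_n) :
  (a *: A + A') - (a *: B + B') - (a *: C + C') = a *: (A - B - C) + (A' - B' - C').
Proof. by apply/rowP => k; rewrite !mxE; ring. Qed.

End Lin.

Section Geo.
Variables (R : realFieldType) (n : nat) (Q : 'M[R]_n) (c : 'I_n -> 'I_n -> 'rV[R]_n).
Hypothesis hQs : Q^T = Q.
Hypothesis hQpd : forall X : 'rV[R]_n, X != 0 -> 0 < ipQ Q X X.
Hypothesis hc : forall a b, c a b = - c b a.
Implicit Types (X Y Z U W : 'rV[R]_n).

Local Notation ip := (ipQ Q).
Local Notation br := (brm c).
Local Notation al := (alphaLC Q c).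
Definition Tq X Y Z := ip (al X Y) Z.

Lemma ip_linl Y : linR (fun X => ip X Y).
Proof. by move=> a X X'; rewrite /ipQ !mulmxDl -!scalemxAl !mxE. Qed.
Lemma ip_sym X Y : ip X Y = ip Y X.
Proof.
by rewrite /ipQ -{1}[X *m Q *m Y^T]trmxK mxE !trmx_mul !trmxK hQs mulmxA.
Qed.
Lemma ip_linr X : linR (ip X).
Proof. by move=> a Y Y'; rewrite !(ip_sym X) ip_linl. Qed.

Lemma ip0l Y : ip 0 Y = 0. Proof. exact: linR0 (ip_linl Y). Qed.
Lemma ip0r X : ip X 0 = 0. Proof. exact: linR0 (ip_linr X). Qed.
Lemma ipvv0 X : ip X X = 0 -> X = 0.
Proof. by move=> h; apply/eqP; apply/negPn/negP => /hQpd; rewrite h ltxx. Qed.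
Lemma ip_ge0 X : 0 <= ip X X.
Proof. by have [->|/hQpd/ltW//] := eqVneq X 0; rewrite ip0l. Qed.

Lemma unit_of_inj k (M : 'M[R]_k) : (forall u : 'rV_k, u *m M = 0 -> u = 0) -> M \in unitmx.
Proof.
move=> h; rewrite -row_free_unit -kermx_eq0; apply/eqP/row_matrixP => i.
by rewrite row0; apply: h; rewrite -row_mul mulmx_ker row0.
Qed.

Lemma Qunit : Q \in unitmx.
Proof.
apply: unit_of_inj => u hu; apply: ipvv0.
by rewrite /ipQ hu mul0mx mxE.
Qed.

Lemma br_linl Y : linV (br ^~ Y).
Proof.
move=> a X X'; rewrite /brm scaler_sumr -big_split; apply: eq_bigr => i _.
rewrite scaler_sumr -big_split; apply: eq_bigr => j _.
rewrite /= !mxE (scalerA a) -scalerDl; congr (_ *: _); ring.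
Qed.
Lemma br_skew X Y : br X Y = - br Y X.
Proof.
rewrite /brm exchange_big -sumrN; apply: eq_bigr => i _.
rewrite -sumrN; apply: eq_bigr => j _.
by rewrite hc scalerN mulrC.
Qed.
Lemma br_linr X : linV (br X).
Proof.
by move=> a Y Y'; rewrite !(br_skew X) br_linl scalerN opprD.
Qed.

Lemma ip_e X k : ip X (delta_mx 0 k) = (X *m Q) 0 k.
Proof.
rewrite /ipQ mxE (bigD1 k) //= big1 ?addr0; first by rewrite !mxE !eqxx mulr1.
by move=> j njk; rewrite !mxE eqxx /= (negbTE njk) mulr0.
Qed.

Lemma Tq_formula X Y Z :
  Tq X Y Z = 2^-1 * (ip (br X Y) Z - ip X (br Y Z) - ip (br X Z) Y).
Proof.
rewrite /Tq /alphaLC.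
set f := fun Z => 2^-1 * (ip (br X Y) Z - ip X (br Y Z) - ip (br X Z) Y).
have lf : linR f.
  move=> a Z1 Z2; rewrite /f ip_linr (linR_comp (ip_linr X) (br_linr Y)).
  rewrite (linR_comp (ip_linl Y) (br_linr X)); ring.
have lg : linR (fun Z => ip (\row_k (2^-1 * (ip (br X Y) (delta_mx 0 k) -
      ip X (br Y (delta_mx 0 k)) - ip (br X (delta_mx 0 k)) Y)) *m invmx Q) Z).
  exact: ip_linr.
rewrite (linR_exp lg Z); transitivity (f Z); last by [].
rewrite (linR_exp lf Z); apply: eq_bigr => k _; congr (_ * _).
by rewrite ip_e mulmxKV ?Qunit // mxE.
Qed.

Lemma ip_inj U W : (forall Z, ip U Z = ip W Z) -> U = W.
Proof.
move=> h; have : U *m Q = W *m Q.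
  by apply/rowP => k; rewrite -!ip_e h.
by move/(congr1 (mulmx^~ (invmx Q))); rewrite !mulmxK ?Qunit.
Qed.

Lemma Tq_lin1 Y Z : linR (fun X => Tq X Y Z).
Proof.
move=> a X X'; rewrite !Tq_formula br_linl ip_linl ip_linl br_linl ip_linl; ring.
Qed.
Lemma Tq_lin2 X Z : linR (fun Y => Tq X Y Z).
Proof.
move=> a Y Y'; rewrite !Tq_formula br_linr ip_linl br_linl ip_linr ip_linr; ring.
Qed.
Lemma Tq_lin3 X Y : linR (Tq X Y).
Proof.
move=> a Z Z'; rewrite !Tq_formula ip_linr br_linr ip_linr br_linr ip_linl; ring.
Qed.

Lemma al_lin1 Y : linV (fun X => al X Y).
Proof.
move=> a X X'; apply: ip_inj => Z; rewrite ip_linl.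
exact: (Tq_lin1 Y Z).
Qed.
Lemma al_lin2 X : linV (al X).
Proof.
move=> a Y Y'; apply: ip_inj => Z; rewrite ip_linl.
exact: (Tq_lin2 X Z).
Qed.

Lemma Tq_skew X Y Z : Tq X Y Z = - Tq X Z Y.
Proof.
rewrite !Tq_formula (br_skew Z Y) (linRN (ip_linr X)) (ip_sym (br X Y)).
rewrite (ip_sym (br X Z)); ring.
Qed.

Lemma Tq_tors X Y Z : Tq X Y Z - Tq Y X Z = ip (br X Y) Z.
Proof.
rewrite !Tq_formula (br_skew Y X) (linRN (ip_linl Z)) (ip_sym Y) (ip_sym (br Y Z)).
have h2 : (2 : R) != 0 by rewrite pnatr_eq0.
by field.
Qed.

Definition pc X v := ip X v / ip v v.
Definition Pj X v := pc X v *: v.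

Lemma pc_mul X v : pc X v * ip v v = ip X v.
Proof.
rewrite /pc; have [/ipvv0 ->|nz] := eqVneq (ip v v) 0; last by rewrite mulfVK.
by rewrite !ip0r mulr0.
Qed.
Lemma Pj_lin v : linV (Pj ^~ v).
Proof. by move=> a X Y; rewrite /Pj /pc ip_linl scalerA -scalerDl mulrDl mulrA. Qed.
Lemma Pj_self v : Pj v v = v.
Proof.
rewrite /Pj /pc; have [/ipvv0 ->|nz] := eqVneq (ip v v) 0; first by rewrite scaler0.
by rewrite divff // scale1r.
Qed.

Lemma subB_sub k m (A B : 'M[R]_(k, n)) (E : 'M[R]_(m, n)) :
  (A <= E)%MS -> (B <= E)%MS -> (A - B <= E)%MS.
Proof. by move=> hA hB; rewrite addmx_sub // -scaleN1r scalemx_sub. Qed.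

Section GS.
Variable u : nat -> 'rV[R]_n.

Fixpoint gsf (k : nat) : nat -> 'rV[R]_n :=
  if k is k'.+1 then
    let f := gsf k' in
    fun j => if j == k' then u k' - \sum_(i < k') Pj (u k') (f i) else f j
  else fun _ => 0.
Definition gs j := gsf j.+1 j.

Lemma gsfE k j : (j < k)%N -> gsf k j = gs j.
Proof.
elim: k => // k IH; rewrite ltnS leq_eqVlt => /orP [/eqP ->|hjk] //=.
by rewrite (ltn_eqF hjk) IH.
Qed.

Lemma gsE j : gs j = u j - \sum_(i < j) Pj (u j) (gs i).
Proof.
rewrite /gs /= eqxx; congr (_ - _); apply: eq_bigr => i _.
by rewrite gsfE.
Qed.

Lemma gs_orth j i : (i < j)%N -> ip (gs i) (gs j) = 0.
Proof.
elim/ltn_ind: j i => j IH i hij.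
rewrite (gsE j) (linRB (ip_linr _)) (linR_sumD (ip_linr _)).
rewrite (bigD1 (Ordinal hij)) //= big1 ?addr0.
  by rewrite /Pj (linRZ (ip_linr _)) pc_mul ip_sym subrr.
move=> k hk; rewrite /Pj (linRZ (ip_linr _)).
have hki : nat_of_ord k != i.
  by apply: contraNneq hk => ek; apply/eqP/val_inj.
case: (ltngtP i k) => [ik|ki|ik]; last by rewrite ik eqxx in hki.
  by rewrite IH ?mulr0.
by rewrite ip_sym IH ?mulr0.
Qed.

Lemma gs_orth' i j : i != j -> ip (gs i) (gs j) = 0.
Proof.
case: (ltngtP i j) => [ij|ji|->]; last by [].
  by rewrite gs_orth.
by rewrite ip_sym gs_orth.
Qed.

Lemma gs_sub m (E : 'M[R]_(m, n)) : (forall j, (u j <= E)%MS) -> forall j, (gs j <= E)%MS.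
Proof.
move=> hu; elim/ltn_ind => j IH; rewrite gsE subB_sub //.
by apply: summx_sub => i _; rewrite /Pj scalemx_sub // IH.
Qed.

Lemma gs_span m j : (j < m)%N -> u j = \sum_(i < m) Pj (u j) (gs i).
Proof.
move=> hjm.
have uE : u j = gs j + \sum_(i < j) Pj (u j) (gs i) by rewrite gsE subrK.
have hgt : forall i, (j < i)%N -> ip (u j) (gs i) = 0.
  move=> i hji; rewrite uE (linRD (ip_linl _)) (linR_sumD (ip_linl _)).
  rewrite gs_orth // big1 ?addr0 // => k _.
  by rewrite /Pj (linRZ (ip_linl _)) gs_orth ?mulr0 // (ltn_trans _ hji).
have heq : Pj (u j) (gs j) = gs j.
  suff e : ip (u j) (gs j) = ip (gs j) (gs j).
    by rewrite /Pj /pc e -/(pc (gs j) (gs j)) -/(Pj (gs j) (gs j)) Pj_self.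
  rewrite {1}uE (linRD (ip_linl _)) (linR_sumD (ip_linl _)).
  rewrite big1 ?addr0 // => k _.
  by rewrite /Pj (linRZ (ip_linl _)) gs_orth ?mulr0.
rewrite -(big_mkord xpredT (fun i => Pj (u j) (gs i))).
rewrite (big_cat_nat (leq0n j) (ltnW hjm)) /= [X in _ + X]big_ltn // heq.
rewrite [X in _ + (_ + X)]big_nat_cond [X in _ + (_ + X)]big1 ?addr0; last first.
  by move=> i /andP [/andP [hi _] _]; rewrite /Pj /pc hgt // mul0r scale0r.
by rewrite big_mkord addrC -uE.
Qed.

End GS.

Lemma proj_formula (I : finType) (v : I -> 'rV[R]_n) X :
  X *m Q *m (\sum_i (ip (v i) (v i))^-1 *: ((v i)^T *m v i)) = \sum_i Pj X (v i).
Proof.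
rewrite mulmx_sumr; apply: eq_bigr => i _.
rewrite -scalemxAr mulmxA [X *m Q *m _]mx11_scalar mul_scalar_mx scalerA.
by rewrite /Pj /pc mulrC.
Qed.

Lemma trace_formula (I : finType) (v : I -> 'rV[R]_n) (L : 'M[R]_n) :
  \tr (L *m Q *m (\sum_i (ip (v i) (v i))^-1 *: ((v i)^T *m v i))) =
  \sum_i (ip (v i) (v i))^-1 * ip (v i *m L) (v i).
Proof.
rewrite mulmx_sumr raddf_sum /=; apply: eq_bigr => i _.
rewrite -scalemxAr mxtraceZ mulmxA mxtrace_mulC trace_mx11.
by rewrite /ipQ !mulmxA.
Qed.

Lemma mt_expand (b : 'rV[R]_n -> 'rV[R]_n -> R)
  (bexp : forall Y Z, b Y Z = \sum_(a < n) \sum_(a' < n) Y 0 a * Z 0 a' * b (delta_mx 0 a) (delta_mx 0 a'))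
  (I : finType) (v : I -> 'rV[R]_n) (w : I -> R) :
  \sum_(a < n) \sum_(a' < n) (\sum_i w i *: ((v i)^T *m v i)) a a' * b (delta_mx 0 a) (delta_mx 0 a')
  = \sum_i w i * b (v i) (v i).
Proof.
under eq_bigr => a _ do under eq_bigr => a' _ do
  rewrite summxE big_distrl /=.
under eq_bigr => a _ do rewrite exchange_big /=.
rewrite exchange_big /=; apply: eq_bigr => i _.
rewrite bexp big_distrr /=; apply: eq_bigr => a _.
rewrite big_distrr /=; apply: eq_bigr => a' _.
rewrite !mxE big_ord1 !mxE; ring.
Qed.

Lemma mt_gen k (B : 'M[R]_(k, n)) (Gi : 'M[R]_k) (b : 'rV[R]_n -> 'rV[R]_n -> R)
  (bexp : forall Y Z, b Y Z = \sum_(a < n) \sum_(a' < n) Y 0 a * Z 0 a' * b (delta_mx 0 a) (delta_mx 0 a')) :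
  \sum_(p < k) \sum_(q < k) Gi p q * b (row p B) (row q B) =
  \sum_(a < n) \sum_(a' < n) (B^T *m Gi *m B) a a' * b (delta_mx 0 a) (delta_mx 0 a').
Proof.
under eq_bigr => p _ do under eq_bigr => q _ do
  rewrite bexp big_distrr /=.
under eq_bigr => p _ do rewrite exchange_big /=.
rewrite exchange_big /=; apply: eq_bigr => a _.
under eq_bigr => p _ do under eq_bigr => q _ do rewrite big_distrr /=.
under eq_bigr => p _ do rewrite exchange_big /=.
rewrite exchange_big /=; apply: eq_bigr => a' _.
rewrite [LHS]exchange_big /= !mxE big_distrl /=; apply: eq_bigr => q _.
rewrite !mxE big_distrl /= big_distrl /=; apply: eq_bigr => p _.
rewrite !mxE; ring.
Qed.

Lemma proj_unique m (E : 'M[R]_(m, n)) (K1 K2 : 'M[R]_n) :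
  (forall X, (X *m Q *m K1 <= E)%MS) -> (forall X, (X *m Q *m K2 <= E)%MS) ->
  (forall X Y, (Y <= E)%MS -> ip (X - X *m Q *m K1) Y = 0) ->
  (forall X Y, (Y <= E)%MS -> ip (X - X *m Q *m K2) Y = 0) -> K1 = K2.
Proof.
move=> s1 s2 o1 o2.
have hX : forall X, X *m Q *m K1 = X *m Q *m K2.
  move=> X; set D := X *m Q *m K1 - X *m Q *m K2.
  have hD : (D <= E)%MS by rewrite subB_sub.
  suff : D = 0 by move/eqP; rewrite subr_eq0 => /eqP.
  apply: ipvv0; rewrite {1}(_ : D = (X - X *m Q *m K2) - (X - X *m Q *m K1)); last first.
    by rewrite /D; apply/rowP => k; rewrite !mxE; ring.
  by rewrite (linRB (ip_linl D)) o1 // o2 // subrr.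
have hQK : Q *m K1 = Q *m K2.
  apply/row_matrixP => a; have := hX (row a 1%:M).
  by rewrite -!row_mul !mul1mx.
by rewrite -(mulKmx Qunit K1) hQK mulKmx // Qunit.
Qed.

Lemma trL m (E : 'M[R]_(m, n)) (P' L : 'M[R]_n) :
  (forall X : 'rV_n, (X *m P' <= E)%MS) ->
  (forall X : 'rV_n, (X <= E)%MS -> X *m P' = X) ->
  (forall X : 'rV_n, (X <= E)%MS -> (X *m L <= E)%MS) ->
  \tr (row_base E *m L *m pinvmx (row_base E)) = \tr (L *m P').
Proof.
move=> h1 h2 hL; set B := row_base E.
have hBE : (B <= E)%MS by rewrite eq_row_base submx_refl.
have hmat2 : forall k (M : 'M_(k, n)), (M <= E)%MS -> M *m P' = M.
  move=> k M hM; apply/row_matrixP => a; rewrite row_mul h2 //.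
  exact: submx_trans (row_sub a M) hM.
have hP'B : (P' <= B)%MS.
  rewrite eq_row_base; apply/row_subP => a.
  by rewrite -(mul1mx P') row_mul h1.
have hBL : (B *m L <= E)%MS.
  apply/row_subP => a; rewrite row_mul hL //.
  exact: submx_trans (row_sub a B) hBE.
have hPL : (pinvmx B *m B *m L <= E)%MS.
  by rewrite -mulmxA; exact: submx_trans (submxMl _ _) hBL.
rewrite mxtrace_mulC mulmxA -(hmat2 _ _ hPL) mxtrace_mulC.
have -> : P' *m (pinvmx B *m B *m L) = P' *m pinvmx B *m B *m L by rewrite !mulmxA.
by rewrite mulmxKpV // mxtrace_mulC.
Qed.

Lemma KB_sub m (E : 'M[R]_(m, n)) X :
  (X *m Q *m ((row_base E)^T *m invmx (row_base E *m Q *m (row_base E)^T) *m row_base E) <= E)%MS.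
Proof.
have : (row_base E <= E)%MS by rewrite eq_row_base submx_refl.
move: (row_base E) => B hB.
by rewrite !mulmxA; apply: submx_trans (submxMl _ _) hB.
Qed.

Lemma KB_orth m (E : 'M[R]_(m, n)) X Y : (Y <= E)%MS ->
  ip (X - X *m Q *m ((row_base E)^T *m invmx (row_base E *m Q *m (row_base E)^T) *m row_base E)) Y = 0.
Proof.
have : (E <= row_base E)%MS by rewrite eq_row_base submx_refl.
have := row_base_free E.
move: (row_base E) => B Bfree hEB hY.
set G := B *m Q *m B^T.
have Gu : G \in unitmx.
  apply: unit_of_inj => u hu; apply: (row_free_inj Bfree).
  rewrite mul0mx; apply: ipvv0.
  by rewrite /ipQ trmx_mul !mulmxA -(mulmxA u B Q) -(mulmxA u) -/G hu !mul0mx mxE.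
have : (Y <= B)%MS by apply: submx_trans hY hEB.
case/submxP => y ->.
rewrite /ipQ trmx_mul !mulmxA !mulmxBl.
have -> : X *m Q *m B^T *m invmx G *m B *m Q *m B^T = X *m Q *m B^T.
  by rewrite -!mulmxA (mulmxA B Q) -/G mulVmx // mulmx1.
by rewrite subrr mxE.
Qed.

Section Main.
Variables (Bm : 'M[R]_n) (r : nat) (lam : 'I_r -> R).
Hypothesis hBs : Bm^T = Bm.
Hypothesis hcod : codazzi Q c Bm.
Hypothesis hlam : forall i j : 'I_r, (i < j)%N -> lam i < lam j.
Hypothesis hsum : (\sum_(i < r) eigsp Q Bm (lam i) :=: 1%:M)%MS.

Local Notation E i := (eigsp Q Bm (lam i)).

Lemma lam_inj (i k : 'I_r) : i != k -> lam i != lam k.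
Proof.
case: (ltngtP i k) => [ik|ki|/val_inj ->]; last by rewrite eqxx.
  by move=> _; rewrite lt_eqF // hlam.
by move=> _; rewrite gt_eqF // hlam.
Qed.

Lemma eig_mul i X : (X <= E i)%MS -> X *m Bm = lam i *: (X *m Q).
Proof.
move/eigenspaceP => h.
by rewrite -(mulmxKV Qunit (X *m Bm)) -(mulmxA X Bm) h -scalemxAl.
Qed.

Lemma bilin_sym X Y : bilin Bm X Y = bilin Bm Y X.
Proof. by rewrite /bilin -{1}[X *m Bm *m Y^T]trmxK mxE !trmx_mul !trmxK hBs mulmxA. Qed.

Lemma bilin_l i X W : (X <= E i)%MS -> bilin Bm X W = lam i * ip X W.
Proof. by move=> h; rewrite /bilin (eig_mul h) -scalemxAl mxE. Qed.
Lemma bilin_r i W Z : (Z <= E i)%MS -> bilin Bm W Z = lam i * ip W Z.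
Proof. by move=> h; rewrite bilin_sym (bilin_l _ h) ip_sym. Qed.

Lemma orthE i k X Y : i != k -> (X <= E i)%MS -> (Y <= E k)%MS -> ip X Y = 0.
Proof.
move=> nik hX hY.
have h1 := bilin_l Y hX; have h2 := bilin_r X hY.
have : (lam i - lam k) * ip X Y = 0 by rewrite mulrBl -h1 -h2 subrr.
move/eqP; rewrite mulf_eq0 subr_eq0 (negbTE (lam_inj nik)) /=.
by move/eqP.
Qed.

Lemma codazzi_rel k i l X Y Z : (X <= E k)%MS -> (Y <= E i)%MS -> (Z <= E l)%MS ->
  (lam l - lam i) * Tq X Y Z = (lam l - lam k) * Tq Y X Z.
Proof.
move=> hX hY hZ; have := hcod X Y Z; rewrite /nablaA.
rewrite (bilin_r _ hZ) (bilin_l _ hY) (bilin_r _ hZ) (bilin_l _ hX).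
rewrite (ip_sym Y) (ip_sym X) -!/(Tq _ _ _) (Tq_skew X Z) (Tq_skew Y Z) => h.
apply/eqP; rewrite -subr_eq0; apply/eqP; rewrite -[LHS]opprK.
have -> : - ((lam l - lam i) * Tq X Y Z - (lam l - lam k) * Tq Y X Z) =
  (- (lam l * Tq X Y Z) - lam i * - Tq X Y Z) - (- (lam l * Tq Y X Z) - lam k * - Tq Y X Z)
  by ring.
by rewrite h subrr oppr0.
Qed.

Lemma BF1 k i X Y Z : k != i -> (X <= E k)%MS -> (Y <= E i)%MS -> (Z <= E k)%MS ->
  Tq X Y Z = 0.
Proof.
move=> nki hX hY hZ; have := codazzi_rel hX hY hZ; rewrite subrr mul0r.
move/eqP; rewrite mulf_eq0 subr_eq0 (negbTE (lam_inj nki)) /=.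
by move/eqP.
Qed.

Lemma BF2 k i X Y Z : k != i -> (X <= E k)%MS -> (Y <= E k)%MS -> (Z <= E i)%MS ->
  Tq X Y Z = 0.
Proof. by move=> nki hX hY hZ; rewrite Tq_skew (BF1 nki hX hZ hY) oppr0. Qed.

Definition uu (i : 'I_r) (j : nat) : 'rV[R]_n :=
  \sum_(l < n | nat_of_ord l == j) row l (E i).
Definition vv (i : 'I_r) (p : nat) := gs (uu i) p.
Definition vx (x : ('I_r * 'I_n)%type) := vv x.1 x.2.
Definition wt (x : ('I_r * 'I_n)%type) := (ip (vx x) (vx x))^-1.

Lemma uuE i (l : 'I_n) : uu i l = row l (E i).
Proof. by rewrite /uu (big_pred1 l). Qed.

Lemma uu_sub i j : (uu i j <= E i)%MS.
Proof. by apply: summx_sub => l _; apply: row_sub. Qed.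

Lemma vv_sub i p : (vv i p <= E i)%MS.
Proof. by apply: gs_sub => j; apply: uu_sub. Qed.

Lemma vx_orth x y : x != y -> ip (vx x) (vx y) = 0.
Proof.
case: x y => [i p] [k q] /=; rewrite /vx /=.
have [-> |nik] := eqVneq i k; last by move=> _; apply: orthE nik (vv_sub _ _) (vv_sub _ _).
rewrite xpair_eqE eqxx /= => npq.
by apply: gs_orth'.
Qed.

Lemma resE i X : (X <= E i)%MS -> X = \sum_(p < n) Pj X (vv i p).
Proof.
have lg : linV (fun X => \sum_(p < n) Pj X (vv i p)).
  move=> a Y Z; rewrite scaler_sumr -big_split; apply: eq_bigr => p _.
  exact: Pj_lin.
case/submxP => y ->; rewrite mulmx_sum_row (linV_sum lg).
apply: eq_bigr => l _; congr (_ *: _).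
by rewrite -uuE {1}(gs_span (uu i) (ltn_ord l)).
Qed.

Lemma RES X : X = \sum_(x : 'I_r * 'I_n) Pj X (vx x).
Proof.
have : (X <= \sum_(i < r) E i)%MS by rewrite hsum submx1.
case/sub_sumsmxP => a ->.
have lg : linV (fun X => \sum_(x : 'I_r * 'I_n) Pj X (vx x)).
  move=> s Y Z; rewrite scaler_sumr -big_split; apply: eq_bigr => p _.
  exact: Pj_lin.
rewrite (linV_sumD lg); apply: eq_bigr => i _.
rewrite -(pair_bigA _ (fun (k : 'I_r) (p : 'I_n) => Pj (a i *m E i) (vv k p))) /=.
rewrite (bigD1 i) //=.
have -> : \sum_(k < r | k != i) \sum_(p < n) Pj (a i *m E i) (vv k p) = 0.
  apply: big1 => k nki; apply: big1 => p _; rewrite eq_sym in nki.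
  have h1 : (a i *m E i <= E i)%MS by apply: submxMl.
  by rewrite /Pj /pc (orthE nki h1 (vv_sub _ _)) mul0r scale0r.
by rewrite addr0 -resE // submxMl.
Qed.

Lemma Minv : invmx Q = \sum_(x : 'I_r * 'I_n) wt x *: ((vx x)^T *m vx x).
Proof.
set M := \sum_(x : 'I_r * 'I_n) _.
have hQM : Q *m M = 1%:M.
  apply/row_matrixP => a; rewrite row_mul.
  rewrite -{1}(mul1mx Q) row_mul /M /wt proj_formula.
  by rewrite -RES.
by rewrite -(mulKmx Qunit M) hQM mulmx1.
Qed.

Lemma inE i W : (forall k X, k != i -> (X <= E k)%MS -> ip W X = 0) -> (W <= E i)%MS.
Proof.
move=> h; rewrite (RES W) -(pair_bigA _ (fun (k : 'I_r) (p : 'I_n) => Pj W (vv k p))) /=.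
rewrite (bigD1 i) //=.
have -> : \sum_(k < r | k != i) \sum_(p < n) Pj W (vv k p) = 0.
  apply: big1 => k nki; apply: big1 => p _.
  by rewrite /Pj /pc (h k) ?vv_sub // mul0r scale0r.
rewrite addr0; apply: summx_sub => p _.
by rewrite /Pj scalemx_sub // vv_sub.
Qed.

Lemma al_closed i X Y : (X <= E i)%MS -> (Y <= E i)%MS -> (al X Y <= E i)%MS.
Proof.
move=> hX hY; apply: inE => k Z nki hZ.
have nik : i != k by rewrite eq_sym.
by rewrite -/(Tq X Y Z) (BF2 nik hX hY hZ).
Qed.

Lemma br_closed i X Y : (X <= E i)%MS -> (Y <= E i)%MS -> (br X Y <= E i)%MS.
Proof.
move=> hX hY; apply: inE => k Z nki hZ.
have nik : i != k by rewrite eq_sym.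
by rewrite -Tq_tors (BF2 nik hX hY hZ) (BF2 nik hY hX hZ) subrr.
Qed.

Lemma Rd_closed i X Y Z : (X <= E i)%MS -> (Y <= E i)%MS -> (Z <= E i)%MS ->
  (Rd Q c X Y Z <= E i)%MS.
Proof.
move=> hX hY hZ; rewrite /Rd !subB_sub //; do ?apply: al_closed => //.
exact: br_closed.
Qed.

Lemma Rd_lin1 Y Z : linV (fun X => Rd Q c X Y Z).
Proof.
move=> a X X'; rewrite /Rd (al_lin1 (al Y Z)) (linV_comp (al_lin2 Y) (al_lin1 Z)).
rewrite (linV_comp (al_lin1 Z) (br_linl Y)).
exact: lin3_arith.
Qed.
Lemma Rd_lin2 X Z : linV (fun Y => Rd Q c X Y Z).
Proof.
move=> a Y Y'; rewrite /Rd (linV_comp (al_lin2 X) (al_lin1 Z)) (al_lin1 (al X Z)).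
rewrite (linV_comp (al_lin1 Z) (br_linr X)).
exact: lin3_arith.
Qed.
Lemma Rd_lin3 X Y : linV (Rd Q c X Y).
Proof.
move=> a Z Z'; rewrite /Rd (linV_comp (al_lin2 X) (al_lin2 Y)).
rewrite (linV_comp (al_lin2 Y) (al_lin2 X)) (al_lin2 (br X Y)).
exact: lin3_arith.
Qed.

Definition LL Y Z := lin1_mx (fun X => Rd Q c X Y Z).

Lemma LL_exp Y Z : LL Y Z =
  \sum_(a < n) \sum_(b < n) (Y 0 a * Z 0 b) *: LL (delta_mx 0 a) (delta_mx 0 b).
Proof.
apply/matrixP => i j; rewrite /LL mxE.
rewrite (bilV_exp (f := fun Y Z => Rd Q c (delta_mx 0 i) Y Z) Y Z
           (fun Z => Rd_lin2 _ Z) (fun Y => Rd_lin3 _ Y)).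
rewrite !summxE; apply: eq_bigr => a _; rewrite !summxE; apply: eq_bigr => b _.
by rewrite !mxE.
Qed.

Lemma tr_exp (N : 'M[R]_n) Y Z : \tr (LL Y Z *m N) =
  \sum_(a < n) \sum_(b < n) Y 0 a * Z 0 b * \tr (LL (delta_mx 0 a) (delta_mx 0 b) *m N).
Proof.
rewrite LL_exp mulmx_suml raddf_sum /=; apply: eq_bigr => a _.
rewrite mulmx_suml raddf_sum /=; apply: eq_bigr => b _.
by rewrite -scalemxAl mxtraceZ.
Qed.

Lemma Ricd_exp Y Z : Ricd Q c Y Z =
  \sum_(a < n) \sum_(b < n) Y 0 a * Z 0 b * Ricd Q c (delta_mx 0 a) (delta_mx 0 b).
Proof.
rewrite /Ricd -/(LL Y Z) -(mulmx1 (LL Y Z)) tr_exp.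
by apply: eq_bigr => a _; apply: eq_bigr => b _; rewrite mulmx1.
Qed.

Lemma trBLP k (B : 'M[R]_(k, n)) (P : 'M[R]_(n, k)) (L : 'M[R]_n) :
  \tr (B *m L *m P) = \tr (L *m (P *m B)).
Proof. by rewrite mxtrace_mulC (mulmxA P B L) mxtrace_mulC. Qed.

Lemma Ricd_on_exp (F : 'M[R]_n) Y Z : Ricd_on Q c F Y Z =
  \sum_(a < n) \sum_(b < n) Y 0 a * Z 0 b * Ricd_on Q c F (delta_mx 0 a) (delta_mx 0 b).
Proof.
rewrite /Ricd_on /restr_trace -/(LL Y Z) trBLP tr_exp.
by apply: eq_bigr => a _; apply: eq_bigr => b _; rewrite trBLP.
Qed.

Lemma Ricd_vx Y Z : Ricd Q c Y Z =
  \sum_(x : 'I_r * 'I_n) wt x * ip (Rd Q c (vx x) Y Z) (vx x).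
Proof.
rewrite /Ricd -/(LL Y Z) -(mulmxK Qunit (LL Y Z)) Minv /wt trace_formula.
by apply: eq_bigr => x _; rewrite mul_rV_lin1' //; apply: Rd_lin1.
Qed.

Definition Mi i := \sum_(p < n) (ip (vv i p) (vv i p))^-1 *: ((vv i p)^T *m vv i p).

Lemma Mi_proj i X : X *m Q *m Mi i = \sum_(p < n) Pj X (vv i p).
Proof. exact: (proj_formula (fun p : 'I_n => vv i p)). Qed.

Lemma Ricd_on_vv i Y Z : (Y <= E i)%MS -> (Z <= E i)%MS ->
  Ricd_on Q c (E i) Y Z =
  \sum_(p < n) (ip (vv i p) (vv i p))^-1 * ip (Rd Q c (vv i p) Y Z) (vv i p).
Proof.
move=> hY hZ; rewrite /Ricd_on /restr_trace -/(LL Y Z).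
rewrite (@trL _ (E i) (Q *m Mi i)).
- rewrite mulmxA /Mi (trace_formula (fun p : 'I_n => vv i p)).
  by apply: eq_bigr => p _; rewrite mul_rV_lin1' //; apply: Rd_lin1.
- by move=> X; rewrite mulmxA Mi_proj; apply: summx_sub => p _;
    rewrite /Pj scalemx_sub // vv_sub.
- by move=> X hX; rewrite mulmxA Mi_proj -resE.
- by move=> X hX; rewrite /LL mul_rV_lin1' ?Rd_closed //; apply: Rd_lin1.
Qed.

Lemma KB_eq i : (row_base (E i))^T *m invmx (row_base (E i) *m Q *m (row_base (E i))^T)
   *m row_base (E i) = Mi i.
Proof.
apply: (@proj_unique _ (E i)).
- exact: KB_sub.
- by move=> X; rewrite Mi_proj; apply: summx_sub => p _; rewrite /Pj scalemx_sub // vv_sub.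
- exact: KB_orth.
- move=> X Y hY; rewrite Mi_proj (linRB (ip_linl Y)) (linR_sumD (ip_linl Y)).
  rewrite {1}(resE hY) (linR_sumD (ip_linr X)); apply/eqP; rewrite subr_eq0; apply/eqP.
  apply: eq_bigr => p _; rewrite /Pj (linRZ (ip_linr X)) (linRZ (ip_linl Y)) /pc.
  by rewrite (ip_sym Y) (ip_sym X); ring.
Qed.

Lemma sd_on_vv i : sd_on Q c (E i) =
  \sum_(p < n) (ip (vv i p) (vv i p))^-1 * Ricd_on Q c (E i) (vv i p) (vv i p).
Proof.
rewrite /sd_on /metric_trace_on /=.
rewrite (mt_gen _ _ (Ricd_on_exp (E i))) KB_eq /Mi.
exact: (mt_expand (Ricd_on_exp (E i)) (fun p : 'I_n => vv i p)).
Qed.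

Lemma sd_vx : sd Q c = \sum_(x : 'I_r * 'I_n) wt x * Ricd Q c (vx x) (vx x).
Proof.
rewrite /sd /evec Minv.
exact: (mt_expand Ricd_exp vx).
Qed.

Local Notation J := ('I_r * 'I_n)%type.

Lemma vx_sub (x : J) : (vx x <= E x.1)%MS.
Proof. exact: vv_sub. Qed.

Lemma exp_first U Y Z : Tq U Y Z = \sum_(z : J) wt z * (ip U (vx z) * Tq (vx z) Y Z).
Proof.
rewrite {1}(RES U) (linR_sumD (Tq_lin1 Y Z)); apply: eq_bigr => z _.
by rewrite /Pj (linRZ (Tq_lin1 Y Z)) /pc /wt; ring.
Qed.

Lemma exp_third A B U : Tq A B U = \sum_(z : J) wt z * (ip U (vx z) * Tq A B (vx z)).
Proof.
rewrite {1}(RES U) (linR_sumD (Tq_lin3 A B)); apply: eq_bigr => z _.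
by rewrite /Pj (linRZ (Tq_lin3 A B)) /pc /wt; ring.
Qed.

Lemma Dterm j Y (x : J) : (Y <= E j)%MS -> x.1 != j ->
  ip (Rd Q c (vx x) Y Y) (vx x) =
  \sum_(z : J | z.1 != j) wt z * (Tq (vx x) Y (vx z) * Tq Y (vx x) (vx z)
     - Tq (vx x) Y (vx z) * Tq (vx z) Y (vx x) + Tq Y (vx x) (vx z) * Tq (vx z) Y (vx x)).
Proof.
move=> hY hx; set v := vx x; have hv : (v <= E x.1)%MS by apply: vx_sub.
rewrite /Rd (linRB (ip_linl v)) (linRB (ip_linl v)) -!/(Tq _ _ _).
rewrite (Tq_skew v (al Y Y)) (Tq_skew Y (al v Y)).
rewrite (exp_third v v) (exp_third Y v) exp_first.
rewrite -!sumrN -!big_split /= [RHS]big_mkcond; apply: eq_bigr => z _ /=.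
rewrite -!/(Tq _ _ _) -Tq_tors.
have hz := vx_sub z.
case: ifP => hzj.
  have njz : j != z.1 by rewrite eq_sym.
  rewrite (BF2 njz hY hY hz); ring.
move/negbFE/eqP: hzj => hzj; rewrite hzj in hz.
have njx : j != x.1 by rewrite eq_sym.
rewrite (BF2 hx hv hv hz) (BF1 njx hY hv hz) (BF2 njx hz hY hv); ring.
Qed.

Lemma swap_cancel j Y :
  \sum_(x : J | x.1 != j) \sum_(z : J | z.1 != j) wt x * wt z *
     (Tq (vx x) Y (vx z) * Tq Y (vx x) (vx z) + Tq Y (vx x) (vx z) * Tq (vx z) Y (vx x)) = 0.
Proof.
set a := fun x z => wt x * wt z * (Tq (vx x) Y (vx z) * Tq Y (vx x) (vx z)).
set b := fun x z => wt x * wt z * (Tq Y (vx x) (vx z) * Tq (vx z) Y (vx x)).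
transitivity (\sum_(x : J | x.1 != j) \sum_(z : J | z.1 != j) a x z +
              \sum_(x : J | x.1 != j) \sum_(z : J | z.1 != j) b x z).
  rewrite -big_split /=; apply: eq_bigr => x _.
  rewrite -big_split /=; apply: eq_bigr => z _.
  by rewrite /a /b mulrDr.
have -> : \sum_(x : J | x.1 != j) \sum_(z : J | z.1 != j) b x z =
          - \sum_(x : J | x.1 != j) \sum_(z : J | z.1 != j) a x z.
  rewrite exchange_big /= -sumrN; apply: eq_bigr => z _.
  rewrite -sumrN; apply: eq_bigr => x _.
  by rewrite /a /b (Tq_skew Y (vx x)); ring.
by rewrite subrr.
Qed.

Lemma sum_blk (F : J -> R) j :
  \sum_(x : J | x.1 == j) F x = \sum_(p < n) F (j, p).
Proof.
rewrite (eq_big (fun x : J => (x.1 == j) && xpredT x.2) (fun x : J => F (x.1, x.2)));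
  [|by move=> x; rewrite andbT|by case].
rewrite -(pair_big (fun i : 'I_r => i == j) xpredT (fun i p => F (i, p))) /=.
by rewrite big_pred1_eq.
Qed.

Lemma RicdDiff j Y : (Y <= E j)%MS ->
  Ricd Q c Y Y - Ricd_on Q c (E j) Y Y =
  - \sum_(x : J | x.1 != j) \sum_(z : J | z.1 != j)
      wt x * wt z * (Tq (vx x) Y (vx z) * Tq (vx z) Y (vx x)).
Proof.
move=> hY; rewrite Ricd_vx (Ricd_on_vv hY hY).
rewrite (bigID (fun x : J => x.1 == j)) /= sum_blk.
rewrite addrAC subrr add0r.
rewrite (eq_bigr (fun x : J => \sum_(z : J | z.1 != j) wt x * wt z *
     (Tq (vx x) Y (vx z) * Tq Y (vx x) (vx z) + Tq Y (vx x) (vx z) * Tq (vx z) Y (vx x))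
   - \sum_(z : J | z.1 != j) wt x * wt z * (Tq (vx x) Y (vx z) * Tq (vx z) Y (vx x)))).
  by rewrite sumrB swap_cancel sub0r.
move=> x hx; rewrite (Dterm hY hx) big_distrr -sumrB /=; apply: eq_bigr => z _.
ring.
Qed.

Lemma wt_ge0 x : 0 <= wt x.
Proof. by rewrite invr_ge0 ip_ge0. Qed.

Lemma part1 (j : 'I_r) : (nat_of_ord j = 0%N \/ nat_of_ord j = r.-1) ->
  forall Y, (Y <= E j)%MS -> Ricd Q c Y Y <= Ricd_on Q c (E j) Y Y.
Proof.
move=> hj Y hY.
have r0 : (0 < r)%N by apply: leq_ltn_trans (ltn_ord j).
have dpos : forall k l : 'I_r, k != j -> l != j -> 0 < (lam l - lam j) * (lam k - lam j).
  move=> k l hk hl; case: hj => hj.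
    have lt : forall m : 'I_r, m != j -> lam j < lam m.
      move=> m hm; apply: hlam; rewrite hj lt0n; apply: contra hm => /eqP hm0.
      by apply/eqP/val_inj; rewrite /= hm0 hj.
    have := lt k hk; have := lt l hl; nra.
  have lt : forall m : 'I_r, m != j -> lam m < lam j.
    move=> m hm; apply: hlam; rewrite ltn_neqAle val_eqE hm /= hj -ltnS prednK //.
  have := lt k hk; have := lt l hl; nra.
rewrite -subr_le0 RicdDiff // oppr_le0; apply: sumr_ge0 => x hx; apply: sumr_ge0 => z hz.
apply: mulr_ge0; first by apply: mulr_ge0; apply: wt_ge0.
have c1 := codazzi_rel (vx_sub x) hY (vx_sub z).
have c2 := codazzi_rel (vx_sub z) hY (vx_sub x).
rewrite -(pmulr_rge0 _ (dpos _ _ hx hz)).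
have -> : (lam z.1 - lam j) * (lam x.1 - lam j) *
    (Tq (vx x) Y (vx z) * Tq (vx z) Y (vx x)) =
    ((lam z.1 - lam j) * Tq (vx x) Y (vx z)) * ((lam x.1 - lam j) * Tq (vx z) Y (vx x)).
  by ring.
rewrite c1 c2 (Tq_skew Y (vx z)).
have -> : (lam z.1 - lam x.1) * Tq Y (vx x) (vx z) *
    ((lam x.1 - lam z.1) * - Tq Y (vx x) (vx z)) =
    ((lam z.1 - lam x.1) * Tq Y (vx x) (vx z)) ^+ 2 by ring.
exact: sqr_ge0.
Qed.

Definition dist3 (a b d : 'I_r) := [&& a != b, b != d & a != d].

Lemma dist3_12 a b d : dist3 b a d = dist3 a b d.
Proof. by rewrite /dist3 (eq_sym b a); case: (a == b); case: (a == d); case: (b == d). Qed.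
Lemma dist3_23 a b d : dist3 a d b = dist3 a b d.
Proof. by rewrite /dist3 (eq_sym d b); case: (a == b); case: (a == d); case: (b == d). Qed.

Definition F3 (x y z : J) :=
  if dist3 x.1 y.1 z.1 then
    wt x * wt y * wt z * (Tq (vx x) (vx y) (vx z) * Tq (vx z) (vx y) (vx x))
  else 0.

Lemma F3_sym x y z : F3 x y z + F3 y x z + F3 x z y = 0.
Proof.
rewrite /F3 (dist3_12 x.1 y.1) (dist3_23 x.1 y.1).
case: ifP => hd; last by rewrite !addr0.
case/and3P: hd => hxy hyz hxz.
have c1 := codazzi_rel (vx_sub x) (vx_sub y) (vx_sub z).
have c2 := codazzi_rel (vx_sub x) (vx_sub z) (vx_sub y).
rewrite (Tq_skew (vx z) (vx y)) (Tq_skew (vx x) (vx z)) (Tq_skew (vx y) (vx z)).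
rewrite (Tq_skew (vx x) (vx z)) in c2.
set t := Tq (vx x) (vx y) (vx z) in c1 c2 *.
set A := Tq (vx y) (vx x) (vx z) in c1 c2 *.
set B := Tq (vx z) (vx x) (vx y) in c1 c2 *.
set u := lam x.1 in c1 c2 *; set v := lam y.1 in c1 c2 *; set w := lam z.1 in c1 c2 *.
have hzx : z.1 != x.1 by rewrite eq_sym.
have hyx : y.1 != x.1 by rewrite eq_sym.
have nz : (w - u) * (v - u) != 0.
  by rewrite mulf_neq0 // subr_eq0 lam_inj.
have key : - t * B + A * B + t * A = 0.
  apply: (mulIf nz); rewrite mul0r.
  have -> : (- t * B + A * B + t * A) * ((w - u) * (v - u)) =
    - t * (w - u) * ((v - u) * B) + ((w - u) * A) * ((v - u) * B)
    + t * (v - u) * ((w - u) * A) by ring.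
  rewrite -c1 -c2; ring.
have -> : wt x * wt y * wt z * (t * - B) + wt y * wt x * wt z * (A * B) +
   wt x * wt z * wt y * (- t * - A) = wt x * wt y * wt z * (- t * B + A * B + t * A)
  by ring.
by rewrite key mulr0.
Qed.

Lemma F3_sum : \sum_(x : J) \sum_(y : J) \sum_(z : J) F3 x y z = 0.
Proof.
set S := \sum_(x : J) \sum_(y : J) \sum_(z : J) F3 x y z.
have e2 : \sum_(x : J) \sum_(y : J) \sum_(z : J) F3 y x z = S by rewrite exchange_big.
have e3 : \sum_(x : J) \sum_(y : J) \sum_(z : J) F3 x z y = S.
  by apply: eq_bigr => x _; rewrite exchange_big.
have : S *+ 3 = 0.
  rewrite !mulrS mulr0n addr0 -{2}e2 -{2}e3 /S.
  rewrite -!big_split /=; apply: big1 => x _.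
  rewrite -!big_split /=; apply: big1 => y _.
  rewrite -!big_split /=; apply: big1 => z _.
  by rewrite addrA F3_sym.
by move/eqP; rewrite mulrn_eq0 /= => /eqP.
Qed.

Lemma part2 : \sum_(i < r) sd_on Q c (E i) = sd Q c.
Proof.
rewrite sd_vx.
under eq_bigr => i _ do rewrite sd_on_vv.
rewrite (pair_bigA _ (fun (i : 'I_r) (p : 'I_n) =>
   (ip (vv i p) (vv i p))^-1 * Ricd_on Q c (E i) (vv i p) (vv i p))) /=.
apply/eqP; rewrite eq_sym -subr_eq0 -sumrB; apply/eqP.
transitivity (\sum_(y : J) wt y * (Ricd Q c (vx y) (vx y) - Ricd_on Q c (E y.1) (vx y) (vx y))).
  by apply: eq_bigr => y _; rewrite mulrBr.
under eq_bigr => y _ do rewrite (RicdDiff (vx_sub y)).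
transitivity (- \sum_(y : J) \sum_(x : J) \sum_(z : J) F3 x y z); last first.
  by rewrite exchange_big /= F3_sum oppr0.
rewrite -sumrN; apply: eq_bigr => y _; rewrite mulrN; congr (- _).
rewrite big_distrr /= big_mkcond /=; apply: eq_bigr => x _.
case: ifP => hxy; last first.
  by apply/esym/big1 => z _; rewrite /F3 /dist3 hxy.
rewrite big_distrr /= big_mkcond /=; apply: eq_bigr => z _.
case: ifP => hzy; last first.
  by rewrite /F3 /dist3 (eq_sym y.1 z.1) hzy /= andbF.
rewrite /F3; case: (eqVneq x.1 z.1) => [exz|nxz].
  have hz : (vx z <= E x.1)%MS by rewrite exz; apply: vx_sub.
  rewrite (BF1 hxy (vx_sub x) (vx_sub y) hz).
  by rewrite /dist3 exz eqxx !andbF /= !mul0r !mulr0.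
by rewrite /dist3 hxy (eq_sym y.1 z.1) hzy nxz /=; ring.
Qed.

End Main.
End Geo.

Theorem proposition3p3 (R : realFieldType) (n : nat)
  (Q : 'M[R]_n) (c : 'I_n -> 'I_n -> 'rV[R]_n) (Bm : 'M[R]_n)
  (r : nat) (lam : 'I_r -> R) :
  (* Ad(H)-invariant inner product on m: symmetric positive definite *)
  Q^T = Q ->
  (forall X : 'rV[R]_n, X != 0 -> 0 < ipQ Q X X) ->
  (* [.,.]_m is skew-symmetric *)
  (forall a b, c a b = - c b a) ->
  (* A symmetric, Codazzi *)
  Bm^T = Bm ->
  codazzi Q c Bm ->
  (* eigenvalues lambda_1 < ... < lambda_r and m = m_1 + ... + m_r *)
  (forall i j : 'I_r, (i < j)%N -> lam i < lam j) ->
  (forall i : 'I_r, eigenvalue (Bm *m invmx Q) (lam i)) ->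
  (\sum_(i < r) eigsp Q Bm (lam i) :=: 1%:M)%MS ->
  (* (i) *)
  (forall j : 'I_r, (nat_of_ord j = 0%N \/ nat_of_ord j = r.-1) ->
     forall Y : 'rV[R]_n, (Y <= eigsp Q Bm (lam j))%MS ->
       Ricd Q c Y Y <= Ricd_on Q c (eigsp Q Bm (lam j)) Y Y)
  /\
  (* (ii) *)
  \sum_(i < r) sd_on Q c (eigsp Q Bm (lam i)) = sd Q c.
Proof.
move=> hQs hQpd hc hBs hcod hlam _ hsum; split.
  by move=> j hj Y hY; apply: (part1 hQs hQpd hc hBs hcod hlam hsum hj hY).
exact: (part2 hQs hQpd hc hBs hcod hlam hsum).
Qed.
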